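(* Fix a target task and the data below, and for $(\mu,f)\in\mathcal{P}(\mathcal{X}_S)\times A_S$ let $$\mathcal{C}(\mu,f):=\inf_{T_0^X\in\mathbb{T}_0^X,\;T_0^Y\in\mathbb{T}_0^Y} C\Big(\mathcal{E}^O\big(T_0^Y(\cdot,f(T_0^X(\cdot)))\big),\;D\big(T_0^X\#\mathrm{Law}(X_T),\mu\big)\Big).$$ Assume there is a constant $L_Y>0$ such that for every $T_0^Y\in\mathbb{T}_0^Y$, $$\|T_0^Y(x_1,y_1)-T_0^Y(x_2,y_2)\|_{\mathcal{Y}_T}\le L_Y\big(\|x_1-x_2\|_{\mathcal{X}_T}+\|y_1-y_2\|_{\mathcal{Y}_S}\big)\quad\forall (x_1,y_1),(x_2,y_2)\in\mathcal{X}_T\times\mathcal{Y}_S,$$ and assume there are $L'>0$ and $p\ge1$ such that $$|\mathcal{E}^O(h_1)-\mathcal{E}^O(h_2)|\le L'\,\mathcal{W}_p\big(h_1\#\mathrm{Law}(X_T),h_2\#\mathrm{Law}(X_T)\big)^p$$ for all intermediate models $h_1,h_2$, i.e. all functions of the form $x\mapsto T_0^Y(x,f(T_0^X(x)))$ with $f\in A_S$, $T_0^X\in\mathbb{T}_0^X$, $T_0^Y\in\mathbb{T}_0^Y$. Then for every fixed $\mu\in\mathcal{P}(\mathcal{X}_S)$, the map $f\mapsto\mathcal{C}(\mu,f)$ is continuous on $(A_S,d_M)$.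
   Context: $(\mathcal{X}_T,\|\cdot\|_{\mathcal{X}_T})$, $(\mathcal{Y}_T,\|\cdot\|_{\mathcal{Y}_T})$, $(\mathcal{X}_S,\|\cdot\|_{\mathcal{X}_S})$, $(\mathcal{Y}_S,\|\cdot\|_{\mathcal{Y}_S})$ are Banach spaces; $X_T$ is an $\mathcal{X}_T$-valued random variable. $A_S$ is a set of functions $\mathcal{X}_S\to\mathcal{Y}_S$, $A_T$ a set of functions $\mathcal{X}_T\to\mathcal{Y}_T$. $\mathbb{T}_0^X$ is a nonempty set of maps $\mathcal{X}_T\to\mathcal{X}_S$ and $\mathbb{T}_0^Y$ a nonempty set of maps $\mathcal{X}_T\times\mathcal{Y}_S\to\mathcal{Y}_T$ such that all intermediate models (as defined in the claim) lie in $A_T$. $\mathcal{E}^O:A_T\to[0,\infty)$ is an output transport risk. $D$ is a metric on the set $\mathcal{P}(\mathcal{X}_S)$ of probability measures on $\mathcal{X}_S$, and $\#$ denotes pushforward. $C:\mathbb{R}\times\mathbb{R}\to\mathbb{R}$ satisfies $C(0,0)=0$, is non-decreasing in each argument, and there is $L>0$ with $|C(a,b)-C(a',b')|\le L(|a-a'|+|b-b'|)$ for all $a,a',b,b'\ge0$. For a fixed constant $M>0$, $d_M(f_1,f_2):=\min\{M,\sup_{x\in\mathcal{X}_S}\|f_1(x)-f_2(x)\|_{\mathcal{Y}_S}\}$ is a metric on $A_S$. $\mathcal{W}_p(\mu,\nu)^p=\inf_{\gamma\in\Pi(\mu,\nu)}\int\|x-y\|_{\mathcal{Y}_T}^p\gamma(dx,dy)$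 over couplings of probability measures on $\mathcal{Y}_T$. *)

(* Defs.v *)
From HB Require Import structures.
From mathcomp Require Import all_boot all_order all_algebra.
From mathcomp Require Import all_classical all_reals all_analysis.
Set Implicit Arguments. Unset Strict Implicit. Unset Printing Implicit Defensive.
Import Order.TTheory GRing.Theory Num.Theory.
Import numFieldNormedType.Exports.
Local Open Scope classical_set_scope.
Local Open Scope ring_scope.

Notation borelT V := (g_sigma_algebraType (@open V)).

(* When f is measurable this is
   the genuine pushforward probability (mathcomp's [distribution]); otherwise
   (never used under the hypotheses of the theorem) a default probability. *)
Definition push d d' (T : measurableType d) (T' : measurableType d')
  (R : realType) (P : probability T R) (f : T -> T') : probability T' R :=
  match pselect (measurable_fun [set: T] f) with
  | left mf =>
      Probability.clone _ _ _
        (distribution P (MeasurableFun.Pack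
           (MeasurableFun.Class (isMeasurableFun.Build _ _ _ _ _ mf)))) _
  | right _ => point
  end.

Definition Law d d' (Omega : measurableType d) (T : measurableType d')
  (R : realType) (P : probability Omega R) (X : Omega -> T) : probability T R :=
  push P X.

Section defs.
Context {R : realType}.

Definition couplings (Y : normedModType R) (nu1 nu2 : probability (borelT Y) R)
  : set (probability (borelT Y * borelT Y)%type R) :=
  [set g | forall A : set (borelT Y), measurable A ->
      g (fst @^-1` A) = nu1 A /\ g (snd @^-1` A) = nu2 A].

Definition Wp_pow (Y : normedModType R) (p : R) (nu1 nu2 : probability (borelT Y) R)
  : \bar R :=
  ereal_inf [set (\int[g]_z ((`| (z.1 : Y) - (z.2 : Y) | `^ p)%:E))%E
            | g in couplings nu1 nu2].

Definition imodel (XT XS YS YT : Type) (f : XS -> YS) (TX : XT -> XS)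
  (TY : XT -> YS -> YT) : XT -> YT := fun x => TY x (f (TX x)).

Definition is_intermediate (XT XS YS YT : Type) (A_S : set (XS -> YS))
  (T0X : set (XT -> XS)) (T0Y : set (XT -> YS -> YT)) (h : XT -> YT) : Prop :=
  exists f TX TY, [/\ A_S f, T0X TX, T0Y TY & h = imodel f TX TY].

Definition dM (XS YS : normedModType R) (M : R) (f1 f2 : XS -> YS) : R :=
  fine (Order.min M%:E (ereal_sup [set (`| f1 x - f2 x |)%:E | x in [set: XS]])).

Definition Ccal (XT YT XS YS : normedModType R)
  (LawXT : probability (borelT XT) R)
  (T0X : set (XT -> XS)) (T0Y : set (XT -> YS -> YT))
  (E : (XT -> YT) -> R)
  (D : probability (borelT XS) R -> probability (borelT XS) R -> R)
  (C : R -> R -> R) (mu : probability (borelT XS) R) (f : XS -> YS) : \bar R :=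
  ereal_inf [set z | exists TX TY, [/\ T0X TX, T0Y TY &
     z = (C (E (imodel f TX TY))
            (D (push LawXT (TX : borelT XT -> borelT XS)) mu))%:E]].

End defs.

(* Main.v *)
Require Import Defs.
From HB Require Import structures.
From mathcomp Require Import all_boot all_order all_algebra.
From mathcomp Require Import all_classical all_reals all_analysis.
Import Order.TTheory GRing.Theory Num.Theory.
Import numFieldNormedType.Exports.
Local Open Scope classical_set_scope.
Local Open Scope ring_scope.

From mathcomp Require Import ring lra.
Section S.
Import HBNNSimple.
Context {R : realType}.

Lemma pushE d d' (T : measurableType d) (T' : measurableType d')
  (P : probability T R) (f : T -> T') : measurable_fun [set: T] f ->
  forall A, push P f A = P (f @^-1` A).
Proof. by move=> mf A; rewrite /push; case: pselect. Qed.

Lemma int_push_le d d' (T : measurableType d) (T' : measurableType d')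
  (P : probability T R) (H : T -> T') (F : T' -> \bar R) (c : R) :
  measurable_fun [set: T] H -> 0 <= c ->
  (forall z, (0 <= F z)%E) -> (forall x, (F (H x) <= c%:E)%E) ->
  (\int[push P H]_z F z <= c%:E)%E.
Proof.
move=> mH c0 F0 Fc.
rewrite ge0_integralTE//; apply/ge_ereal_sup => _ [h /= hF <-].
rewrite -integralT_nnsfun.
rewrite /push; case: pselect => // mH' /=.
rewrite ge0_integral_pushforward //=; last first.
  by move=> y _; rewrite lee_fin; by [].
  by apply/measurable_realfun.measurable_EFinP; exact: measurable_funPT.
rewrite preimage_setT.
apply: (@le_trans _ _ (\int[P]_(x in setT) (cst c%:E) x)%E).
  apply: ge0_le_integral => //.
  - by move=> x _; rewrite /= lee_fin.
  - by apply/measurable_realfun.measurable_EFinP; apply: measurableT_comp => //; exact: measurable_funPT.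
  - by move=> x _ /=; apply: le_trans (hF (H x)) (Fc x).
rewrite integral_cst //.
have h1 := probability_setT P.
move: h1 => /= ->; by rewrite mule1.
Qed.

Lemma Wp_le (XT Y : normedModType R) (Q : probability (borelT XT) R)
  (h1 h2 : XT -> Y) (p c : R) :
  measurable_fun [set: borelT XT] (h1 : borelT XT -> borelT Y) ->
  measurable_fun [set: borelT XT] (h2 : borelT XT -> borelT Y) -> 0 <= c ->
  (forall x, `|h1 x - h2 x| `^ p <= c) ->
  (Wp_pow p (push Q (h1 : borelT XT -> borelT Y)) (push Q (h2 : borelT XT -> borelT Y)) <= c%:E)%E.
Proof.
move=> m1 m2 c0 hc.
pose H := fun x : borelT XT => ((h1 x : borelT Y), (h2 x : borelT Y)).
have mH : measurable_fun [set: borelT XT] H by apply: measurable_fun_pair.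
rewrite /Wp_pow.
apply: (@le_trans _ _ (\int[push Q H]_z ((`|(z.1 : Y) - (z.2 : Y)| `^ p)%:E))%E).
  apply: ereal_inf_lbound; exists (push Q H) => //.
  by move=> A mA; rewrite !pushE.
apply: int_push_le => //.
Qed.

Lemma inf2_le (A B : Type) (SA : set A) (SB : set B) (F G : A -> B -> R) (K : R) :
  (forall a b, SA a -> SB b -> F a b <= G a b + K) ->
  (ereal_inf [set z | exists a b, [/\ SA a, SB b & z = (F a b)%:E]] <=
   ereal_inf [set z | exists a b, [/\ SA a, SB b & z = (G a b)%:E]] + K%:E)%E.
Proof.
move=> FG; rewrite -leeBlDr //; apply: le_ereal_inf_tmp => _ [a [b [Aa Bb ->]]].
rewrite leeBlDr // -EFinD.
apply: (@le_trans _ _ (F a b)%:E); last by rewrite lee_fin FG.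
by apply: ereal_inf_lbound; exists a, b.
Qed.

Lemma inf2_fin (A B : Type) (SA : set A) (SB : set B) (F : A -> B -> R) :
  SA !=set0 -> SB !=set0 -> (forall a b, SA a -> SB b -> 0 <= F a b) ->
  exists r, ereal_inf [set z | exists a b, [/\ SA a, SB b & z = (F a b)%:E]] = r%:E.
Proof.
move=> [a Aa] [b Bb] F0.
set S := [set z | _].
have h1 : (0 <= ereal_inf S)%E.
  by apply: le_ereal_inf_tmp => _ [a' [b' [? ? ->]]]; rewrite lee_fin F0.
have h2 : (ereal_inf S <= (F a b)%:E)%E by apply: ereal_inf_lbound; exists a, b.
by move: h1 h2; case: (ereal_inf S) => [r| |] //; exists r.
Qed.
End S.

Theorem proposition7 (R : realType) (XT YT XS YS : completeNormedModType R)
  (dO : measure_display) (Omega : measurableType dO) (P : probability Omega R)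
  (X_T : Omega -> borelT XT) (mX_T : measurable_fun [set: Omega] X_T)
  (A_S : set (XS -> YS)) (A_T : set (XT -> YT))
  (T0X : set (XT -> XS)) (T0Y : set (XT -> YS -> YT))
  (E : (XT -> YT) -> R)
  (D : probability (borelT XS) R -> probability (borelT XS) R -> R)
  (C : R -> R -> R) (M : R) :
  (* standing assumptions *)
  T0X !=set0 -> T0Y !=set0 ->
  (forall h, is_intermediate A_S T0X T0Y h -> A_T h) ->
  (forall h, A_T h -> 0 <= E h) ->
  (* measurability implicit in the pushforwards T0X # Law(X_T), h # Law(X_T) *)
  (forall TX, T0X TX -> measurable_fun [set: borelT XT] (TX : borelT XT -> borelT XS)) ->
  (forall h, is_intermediate A_S T0X T0Y h ->
     measurable_fun [set: borelT XT] (h : borelT XT -> borelT YT)) ->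
  (* D is a metric on P(X_S) *)
  (forall m1 m2, 0 <= D m1 m2) ->
  (forall m1 m2, D m1 m2 = 0 <-> m1 = m2) ->
  (forall m1 m2, D m1 m2 = D m2 m1) ->
  (forall m1 m2 m3, D m1 m3 <= D m1 m2 + D m2 m3) ->
  (* properties of C *)
  C 0 0 = 0 ->
  (forall a a' b, a <= a' -> C a b <= C a' b) ->
  (forall a b b', b <= b' -> C a b <= C a b') ->
  (exists2 L : R, 0 < L & forall a a' b b', 0 <= a -> 0 <= a' -> 0 <= b -> 0 <= b' ->
     `|C a b - C a' b'| <= L * (`|a - a'| + `|b - b'|)) ->
  0 < M ->
  (* Lipschitz assumption on T0Y *)
  (exists2 LY : R, 0 < LY & forall TY, T0Y TY -> forall (x1 x2 : XT) (y1 y2 : YS),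
     `|TY x1 y1 - TY x2 y2| <= LY * (`|x1 - x2| + `|y1 - y2|)) ->
  (* Wasserstein-Lipschitz assumption on E^O over intermediate models *)
  (exists L' : R, exists2 p : R, 0 < L' /\ 1 <= p &
     forall h1 h2, is_intermediate A_S T0X T0Y h1 -> is_intermediate A_S T0X T0Y h2 ->
       ((`|E h1 - E h2|)%:E <= L'%:E *
          Wp_pow p (push (Law P X_T) (h1 : borelT XT -> borelT YT))
                   (push (Law P X_T) (h2 : borelT XT -> borelT YT)))%E) ->
  (* conclusion: f |-> C(mu, f) is continuous on (A_S, d_M) *)
  forall mu : probability (borelT XS) R,
  forall f, A_S f -> forall eps : R, 0 < eps ->
    exists2 delta : R, 0 < delta & forall g, A_S g -> dM M f g < delta ->
      (`|Ccal (Law P X_T) T0X T0Y E D C mu f - Ccal (Law P X_T) T0X T0Y E D C mu g| < eps%:E)%E.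

Proof.
move=> [TX0 hTX0] [TY0 hTY0] hAT hE hmX hmh hD0 hDeq hDsym hDtri hC00 hCa hCb
  [L L0 hL] M0 [LY LY0 hLY] [L' [p [L'0 p1] hW]] mu f Af eps eps0.
have hC0 : forall a b, 0 <= a -> 0 <= b -> 0 <= C a b.
  move=> a b a0 b0; rewrite -hC00; apply: (le_trans (hCb 0 0 b b0)); exact: hCa.
pose K := L * L' * LY.
have K0 : 0 < K by rewrite !mulr_gt0.
pose delta := Num.min M (Num.min LY^-1 (eps / (2 * K))).
have d0 : 0 < delta by rewrite /delta !lt_min M0 invr_gt0 LY0 divr_gt0 ?mulr_gt0.
have dleM : delta <= M by rewrite /delta ge_min lexx.
have dLY : LY * delta <= 1.
  have h : delta <= LY^-1 by rewrite /delta !ge_min lexx orbT.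
  by have := ler_wpM2l (ltW LY0) h; rewrite mulfV ?gt_eqF.
have dK : K * delta <= eps / 2.
  have h : delta <= eps / (2 * K) by rewrite /delta !ge_min lexx !orbT.
  have := ler_wpM2l (ltW K0) h.
  rewrite (_ : K * (eps / (2 * K)) = eps / 2) //.
  by field; rewrite gt_eqF.
exists delta => // g Ag hdM.
have hfg : forall y, `|f y - g y| < delta.
  move=> y; rewrite ltNge; apply/negP => hy.
  move: hdM; rewrite /dM.
  set S := ereal_sup _.
  have h1 : (delta%:E <= S)%E.
    apply: (@le_trans _ _ (`|f y - g y|)%:E); first by rewrite lee_fin.
    by apply: ereal_sup_ubound; exists y.
  set m := Order.min _ _.
  have h2 : (delta%:E <= m)%E by rewrite le_min lee_fin dleM h1.
  have h3 : (m <= M%:E)%E by rewrite ge_min lexx.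
  by move: h2 h3; case: m => [r| |] //=; rewrite !lee_fin => h2 _; rewrite ltNge h2.
have hbnd : forall TX TY, T0X TX -> T0Y TY ->
    `|E (imodel f TX TY) - E (imodel g TX TY)| <= L' * (LY * delta).
  move=> TX TY hX hY.
  have If : is_intermediate A_S T0X T0Y (imodel f TX TY) by exists f, TX, TY.
  have Ig : is_intermediate A_S T0X T0Y (imodel g TX TY) by exists g, TX, TY.
  have hW' := hW _ _ If Ig.
  have hWp : (Wp_pow p (push (Law P X_T) (imodel f TX TY : borelT XT -> borelT YT))
     (push (Law P X_T) (imodel g TX TY : borelT XT -> borelT YT)) <= (LY * delta)%:E)%E.
    apply: Wp_le; [exact: hmh|exact: hmh| by rewrite mulr_ge0 // ltW |].
    move=> x; rewrite /imodel.
    have hx : `|TY x (f (TX x)) - TY x (g (TX x))| <= LY * delta.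
      apply: le_trans (hLY _ hY _ _ _ _) _.
      rewrite subrr normr0 add0r.
      by apply: ler_wpM2l; [exact: ltW | exact: ltW (hfg _)].
    apply: (@le_trans _ _ ((LY * delta) `^ p)).
      apply: ge0_ler_powR => //; first by apply: le_trans p1.
      by rewrite nnegrE.
      by rewrite nnegrE mulr_ge0 // ltW.
    by apply: ge1r_powR => //; rewrite mulr_gt0 ?dLY.
  rewrite -lee_fin EFinM; apply: le_trans hW' _.
  by apply: lee_wpmul2l => //; rewrite lee_fin ltW.
have hCd : forall TX TY, T0X TX -> T0Y TY ->
   `|C (E (imodel f TX TY)) (D (push (Law P X_T) (TX : borelT XT -> borelT XS)) mu)
    - C (E (imodel g TX TY)) (D (push (Law P X_T) (TX : borelT XT -> borelT XS)) mu)|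
   <= K * delta.
  move=> TX TY hX hY.
  have Ef0 : 0 <= E (imodel f TX TY) by apply: hE; apply: hAT; exists f, TX, TY.
  have Eg0 : 0 <= E (imodel g TX TY) by apply: hE; apply: hAT; exists g, TX, TY.
  apply: le_trans (hL _ _ _ _ Ef0 Eg0 (hD0 _ _) (hD0 _ _)) _.
  rewrite subrr normr0 addr0 /K -!mulrA.
  by apply: ler_wpM2l; [exact: ltW | exact: hbnd].
pose F := fun TX TY => C (E (imodel f TX TY)) (D (push (Law P X_T) (TX : borelT XT -> borelT XS)) mu).
pose G := fun TX TY => C (E (imodel g TX TY)) (D (push (Law P X_T) (TX : borelT XT -> borelT XS)) mu).
have e1 : (Ccal (Law P X_T) T0X T0Y E D C mu f <= Ccal (Law P X_T) T0X T0Y E D C mu g + (K * delta)%:E)%E.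
  apply: (@inf2_le _ _ _ T0X T0Y F G) => TX TY hX hY.
  by have := hCd _ _ hX hY; rewrite ler_norml /F /G => /andP[h1 h2]; lra.
have e2 : (Ccal (Law P X_T) T0X T0Y E D C mu g <= Ccal (Law P X_T) T0X T0Y E D C mu f + (K * delta)%:E)%E.
  apply: (@inf2_le _ _ _ T0X T0Y G F) => TX TY hX hY.
  by have := hCd _ _ hX hY; rewrite ler_norml /F /G => /andP[h1 h2]; lra.
have [rx ex] : exists r, Ccal (Law P X_T) T0X T0Y E D C mu f = r%:E.
  apply: (@inf2_fin _ _ _ T0X T0Y F); [by exists TX0|by exists TY0|].
  move=> TX TY hX hY; apply: hC0 => //; apply: hE; apply: hAT; by exists f, TX, TY.
have [ry ey] : exists r, Ccal (Law P X_T) T0X T0Y E D C mu g = r%:E.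
  apply: (@inf2_fin _ _ _ T0X T0Y G); [by exists TX0|by exists TY0|].
  move=> TX TY hX hY; apply: hC0 => //; apply: hE; apply: hAT; by exists g, TX, TY.
rewrite ex ey -EFinD lee_fin in e1; rewrite ex ey -EFinD lee_fin in e2.
rewrite ex ey -EFinB abse_EFin lte_fin.
have : `|rx - ry| <= K * delta by rewrite ler_norml; apply/andP; split; lra.
move=> h; lra.
Qed.
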